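(* Let $k$ be a field and let $h_\bullet=(h_0,h_1,h_2,\ldots)$ be a sequence of nonnegative integers with $h_0=1$ that is unimodal at each tail. Let $n=h_1$ if $h_1\ge1$ and $n=1$ if $h_1=0$. Then there is an almost reverse lexicographic ideal $I$ in $R=k[x_1,\ldots,x_n]$ such that $H(R/I,d)=h_d$ for all $d\ge0$.
   Context: $H(R/I,d)=\dim_k(R/I)_d$. Degree reverse lexicographic order: for $M=x^\alpha,N=x^\beta$, $M>N$ iff $\deg M>\deg N$, or degrees are equal and for the largest $s$ with $\alpha_s\neq\beta_s$ one has $\alpha_s<\beta_s$. A monomial ideal $I$ is almost reverse lexicographic if for every monomial $M$ and every minimal monomial generator $N$ of $I$ with $\deg M=\deg N$ and $M>N$, $M\in I$ (the zero ideal counts). For a sequence $h_\bullet$ of nonnegative integers with $h_0=1$: $h^{(0)}_\bullet=h_\bullet$ and, for $1\le i<h_1$, $h^{(i)}_0=1$, $h^{(i)}_d=\max\{0,h^{(i-1)}_d-h^{(i-1)}_{d-1}\}$ for $d\ge1$. For $0\le i<\max\{1,h_1\}$, $r_i=\min\{d\ge1:h^{(i)}_d\le h^{(i)}_{d-1}\}$ ($\infty$ if none), and $D(h_\bullet)=\min\{i:r_i<\infty\}$. The sequence is unimodal at each tail if for every $i$ with $D(h_\bullet)\le i<\max\{1,h_1\}$, $h^{(i)}_d\le h^{(i)}_{d-1}$ for all $d\ge r_i$. *)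

(* Defs.v *)
From HB Require Import structures.
From mathcomp Require Import all_boot all_order all_algebra.
From mathcomp Require Import mpoly.
Set Implicit Arguments. Unset Strict Implicit. Unset Printing Implicit Defensive.
Import Order.TTheory GRing.Theory.
Local Open Scope ring_scope.

Fixpoint hdiff (h : nat -> nat) (i : nat) : nat -> nat :=
  match i with
  | 0 => h
  | i'.+1 => fun d => match d with
                      | 0 => 1%N
                      | d'.+1 => (hdiff h i' d'.+1 - hdiff h i' d')%N
                      end
  end.

Definition is_r (h : nat -> nat) (i r : nat) : Prop :=
  [/\ (1 <= r)%N, (hdiff h i r <= hdiff h i r.-1)%N &
      forall e, (1 <= e)%N -> (e < r)%N -> (hdiff h i e.-1 < hdiff h i e)%N].

Definition r_finite (h : nat -> nat) (i : nat) : Prop :=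
  exists d, (1 <= d)%N /\ (hdiff h i d <= hdiff h i d.-1)%N.

(* unimodal at each tail: for every i with D(h) <= i < max(1,h_1)
   (D(h) <= i  iff  r_j < oo for some j <= i), h^(i)_d <= h^(i)_{d-1} for all d >= r_i *)
Definition unimodal_at_each_tail (h : nat -> nat) : Prop :=
  forall i, (i < maxn 1 (h 1%N))%N ->
    (exists j, (j <= i)%N /\ r_finite h j) ->
    forall r, is_r h i r ->
    forall d, (r <= d)%N -> (hdiff h i d <= hdiff h i d.-1)%N.

Definition is_ideal (k : fieldType) (n : nat) (I : {mpoly k[n]} -> Prop) : Prop :=
  [/\ I 0, (forall p q, I p -> I q -> I (p + q)) &
      (forall p q, I q -> I (p * q))].

(* monomial ideal: an ideal generated by monomials, i.e. containing every
   monomial occurring in any of its elements *)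
Definition is_monomial_ideal (k : fieldType) (n : nat) (I : {mpoly k[n]} -> Prop) : Prop :=
  is_ideal I /\ forall p, I p -> forall m, m \in msupp p -> I 'X_[m].

Definition degrevlex_gt (n : nat) (a b : 'X_{1..n}) : Prop :=
  (mdeg b < mdeg a)%N \/
  (mdeg a = mdeg b /\
   exists s : 'I_n, (a s < b s)%N /\ forall t : 'I_n, (s < t)%N -> a t = b t).

Definition min_mon_gen (k : fieldType) (n : nat) (I : {mpoly k[n]} -> Prop)
    (b : 'X_{1..n}) : Prop :=
  I 'X_[b] /\ forall c : 'X_{1..n}, (c <= b)%MM -> c != b -> ~ I 'X_[c].

Definition almost_revlex (k : fieldType) (n : nat) (I : {mpoly k[n]} -> Prop) : Prop :=
  forall (a b : 'X_{1..n}), min_mon_gen I b -> mdeg a = mdeg b ->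
    degrevlex_gt a b -> I 'X_[a].

(* H(R/I, d) = dim_k (R/I)_d = v : there are v elements of R_d linearly
   independent modulo I, but no v+1 such elements. *)
Definition lin_indep_mod (k : fieldType) (n : nat) (I : {mpoly k[n]} -> Prop)
    (m : nat) (ps : 'I_m -> {mpoly k[n]}) : Prop :=
  forall c : 'I_m -> k, I (\sum_(i < m) c i *: ps i) -> forall i, c i = 0.

Definition hilb_eq (k : fieldType) (n : nat) (I : {mpoly k[n]} -> Prop)
    (d v : nat) : Prop :=
  (exists ps : 'I_v -> {mpoly k[n]},
      (forall i, ps i \is d.-homog) /\ lin_indep_mod I ps) /\
  (forall ps : 'I_v.+1 -> {mpoly k[n]},
      (forall i, ps i \is d.-homog) -> ~ lin_indep_mod I ps).

(* Main.v *)
Require Import Defs.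
From HB Require Import structures.
From mathcomp Require Import all_boot all_order all_algebra.
From mathcomp Require Import mpoly.
From mathcomp Require Import zify.
Set Implicit Arguments. Unset Strict Implicit. Unset Printing Implicit Defensive.
Section Ext.
Variable n : nat.

Definition res (m : 'X_{1..n.+1}) : 'X_{1..n} := [multinom m (lift ord_max i) | i < n].
Definition ext (q : 'X_{1..n}) (j : nat) : 'X_{1..n.+1} :=
  [multinom (if unlift ord_max i is Some i' then q i' else j) | i < n.+1].

Lemma res_ext q j : res (ext q j) = q.
Proof. by apply/mnmP=> i; rewrite !mnmE liftK. Qed.

Lemma last_ext q j : ext q j ord_max = j.
Proof. by rewrite mnmE unlift_none. Qed.

Lemma ext_res m : ext (res m) (m ord_max) = m.
Proof.
apply/mnmP=> i; rewrite mnmE; case: unliftP => [i' ->|->] //.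
by rewrite mnmE.
Qed.

Lemma ext_lift q j i : ext q j (lift ord_max i) = q i.
Proof. by rewrite mnmE liftK. Qed.

Lemma mdeg_ext q j : mdeg (ext q j) = (mdeg q + j)%N.
Proof.
rewrite !mdegE big_ord_recr /= last_ext; congr (_ + _)%N.
apply: eq_bigr => i _; rewrite -(ext_lift q j); congr (ext q j _).
by apply: val_inj; rewrite /= /bump leqNgt ltn_ord.
Qed.

Lemma mdeg_res m : mdeg m = (mdeg (res m) + m ord_max)%N.
Proof. by rewrite -{1}(ext_res m) mdeg_ext. Qed.

Lemma ext_inj q1 j1 q2 j2 : ext q1 j1 = ext q2 j2 -> q1 = q2 /\ j1 = j2.
Proof.
move=> e; split; first by rewrite -(res_ext q1 j1) e res_ext.
by rewrite -(last_ext q1 j1) e last_ext.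
Qed.

Lemma lem_ext q1 j1 q2 j2 :
  (ext q1 j1 <= ext q2 j2)%MM = (q1 <= q2)%MM && (j1 <= j2)%N.
Proof.
apply/mnm_lepP/andP => [H|[/mnm_lepP H1 H2] i].
  split; last by move: (H ord_max); rewrite !last_ext.
  by apply/mnm_lepP => i; move: (H (lift ord_max i)); rewrite !ext_lift.
case: (unliftP ord_max i) => [i' ->|->]; first by rewrite !ext_lift.
by rewrite !last_ext.
Qed.

Lemma lem_res m1 m2 : (m1 <= m2)%MM = (res m1 <= res m2)%MM && (m1 ord_max <= m2 ord_max)%N.
Proof. by rewrite -{1}(ext_res m1) -{1}(ext_res m2) lem_ext. Qed.

End Ext.

Lemma lem_mdeg n (m1 m2 : 'X_{1..n}) : (m1 <= m2)%MM -> (mdeg m1 <= mdeg m2)%N.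
Proof. by move/mnm_lepP=> H; rewrite !mdegE; apply: leq_sum => i _. Qed.

Lemma lem_mdeg_lt n (m1 m2 : 'X_{1..n}) : (m1 <= m2)%MM -> m1 != m2 -> (mdeg m1 < mdeg m2)%N.
Proof.
move=> le ne; rewrite ltn_neqAle lem_mdeg // andbT.
apply: contra ne => /eqP e; apply/eqP/mnmP => i.
move/mnm_lepP: le => le.
apply/eqP; rewrite eqn_leq le /=.
move: e; rewrite !mdegE (bigD1 i) //= [X in _ = X](bigD1 i) //= => e.
rewrite leqNgt; apply/negP => lt.
have: (\sum_(j | j != i) m1 j <= \sum_(j | j != i) m2 j)%N by apply: leq_sum => j _.
move: e lt => e lt. move=> H; move: H e lt.
set A := (\sum_(j | _) m1 j)%N. set B := (\sum_(j | _) m2 j)%N. lia. 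
Qed.
Fixpoint rle (k : nat) (f g : nat -> nat) : bool :=
  match k with
  | 0 => true
  | k'.+1 => (f k' < g k')%N || ((f k' == g k') && rle k' f g)
  end.

Lemma rle_trans k f g h : rle k f g -> rle k g h -> rle k f h.
Proof.
elim: k => //= k IH /orP[lt|/andP[/eqP e r1]] /orP[lt2|/andP[/eqP e2 r2]].
- by rewrite (ltn_trans lt lt2).
- by rewrite -e2 lt.
- by rewrite e lt2.
- by rewrite e e2 eqxx (IH r1 r2) orbT.
Qed.

Lemma rle_total k f g : rle k f g || rle k g f.
Proof.
elim: k => //= k IH.
by case: (ltngtP (f k) (g k)).
Qed.

Lemma rle_strict k f g s : (s < k)%N -> (f s < g s)%N ->
  (forall t, (s < t)%N -> (t < k)%N -> f t = g t) -> ~~ rle k g f.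
Proof.
elim: k => // k IH lsk lt eq /=.
move: lsk; rewrite ltnS leq_eqVlt => /orP[/eqP sk|sk]; last first.
  rewrite (eq k sk (ltnSn k)) ltnn eqxx /=.
  by apply: IH => // t st tk; apply: eq => //; apply: ltnW.
by rewrite -sk ltnNge (ltnW lt) /= (gtn_eqF lt).
Qed.

Section LeQ.
Variable n : nat.
Definition nf (q : 'X_{1..n}) (i : nat) : nat := nth 0%N (val (val q)) i.

Lemma nfE q (i : 'I_n) : nf q i = q i.
Proof. by rewrite /nf (mnm_nth 0%N). Qed.

Definition leQ (q q' : 'X_{1..n}) : bool :=
  (mdeg q < mdeg q')%N || ((mdeg q == mdeg q') && rle n (nf q') (nf q)).

Lemma leQ_trans : transitive leQ.
Proof.
move=> q2 q1 q3 /orP[l1|/andP[/eqP e1 r1]] /orP[l2|/andP[/eqP e2 r2]];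
  rewrite /leQ.
- by rewrite (ltn_trans l1 l2).
- by rewrite -e2 l1.
- by rewrite e1 l2.
- by rewrite e1 e2 eqxx (rle_trans r2 r1) orbT.
Qed.

Lemma leQ_total : total leQ.
Proof.
move=> q q'; rewrite /leQ; case: (ltngtP (mdeg q) (mdeg q')) => //= _.
by rewrite orbC rle_total.
Qed.

Lemma leQ_deg q q' : (mdeg q' < mdeg q)%N -> ~~ leQ q q'.
Proof.
move=> lt; rewrite /leQ negb_or ltnNge (ltnW lt) /=.
by rewrite (gtn_eqF lt).
Qed.

Lemma leQ_revlex q q' (s : 'I_n) : mdeg q = mdeg q' -> (q s < q' s)%N ->
  (forall t : 'I_n, (s < t)%N -> q t = q' t) -> ~~ leQ q q'.
Proof.
move=> e lt eq; rewrite /leQ e ltnn eqxx /=.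
apply: (@rle_strict _ _ _ s) => //; first by rewrite !nfE.
move=> t st tn; have := eq (Ordinal tn) st.
by rewrite -!nfE.
Qed.
End LeQ.

Lemma take_downset (T : eqType) (le : rel T) (s : seq T) c q q' :
  transitive le -> sorted le s -> q \in take c s -> q' \in s -> ~~ le q q' ->
  q' \in take c s.
Proof.
move=> tr so qin q'in nle.
have : pairwise le (take c s ++ drop c s) by rewrite cat_take_drop -sorted_pairwise.
rewrite pairwise_cat => /and3P[/allrelP ar _ _].
move: q'in; rewrite -{1}(cat_take_drop c s) mem_cat => /orP[//|qd2].
by move: (ar q q' qin qd2) nle => ->.
Qed.
From Stdlib Require Import FunctionalExtensionality Classical.

Lemma hdiffS_pt h i d : hdiff h i.+1 d = hdiff (hdiff h 1) i d.
Proof.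
elim: i d => [|i IH] d; first by [].
by case: d => [|d] //=; rewrite -!IH.
Qed.

Lemma hdiffS h i : hdiff h i.+1 = hdiff (hdiff h 1) i.
Proof. by apply: functional_extensionality => d; apply: hdiffS_pt. Qed.

Lemma hdiff1E h d : hdiff h 1 d.+1 = (h d.+1 - h d)%N.
Proof. by []. Qed.

Lemma unimodal0 h : h 0%N = 1%N -> unimodal_at_each_tail h ->
  (h 1 <= 1)%N -> forall d, (1 <= d)%N -> (h d <= h d.-1)%N.
Proof.
move=> h0 U h1 d d1.
apply: (U 0%N _ _ 1%N) => //.
- by rewrite leq_max ltnS leqnn.
- by exists 0%N; split => //; exists 1%N; rewrite /= h0.
- by split => //= [|e e1 e2]; [rewrite h0 | move: e1 e2; lia].
Qed.

Lemma hdiff_zero h j : (forall d, (1 <= d)%N -> hdiff h j d = 0%N) ->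
  forall d, (1 <= d)%N -> hdiff h j.+1 d = 0%N.
Proof. by move=> H [|d] //= _; rewrite H. Qed.

Lemma hdiff_zero_all h : (forall d, (1 <= d)%N -> (h d <= h d.-1)%N) ->
  forall i d, (1 <= d)%N -> hdiff h i.+1 d = 0%N.
Proof.
move=> H; elim=> [|i IH]; first by case=> [|d] //= _; move: (H d.+1 isT) => /=; lia.
exact: hdiff_zero.
Qed.

Lemma unimodal_diff h n : h 0%N = 1%N -> h 1%N = n.+1 -> unimodal_at_each_tail h ->
  unimodal_at_each_tail (hdiff h 1).
Proof.
move=> h0 h1 U i.
case: n h1 => [|n] h1.
  have H := unimodal0 h0 U (eq_leq h1).
  move=> _ _ r [r1 _ _] d rd.
  by rewrite -hdiffS hdiff_zero_all //; apply: leq_trans rd.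
rewrite hdiffS_pt /= h1 h0 subn1 /= => iN [j [ji rf]] r ir.
rewrite -!hdiffS.
apply: (U i.+1).
- by rewrite h1; move: iN; lia.
- exists j.+1; split => //; by move: rf; rewrite /r_finite (hdiffS h j).
- by move: ir; rewrite /is_r (hdiffS h i).
Qed.
Definition comb_ok N (h : nat -> nat) (S : pred 'X_{1..N}) : Prop :=
  [/\ forall m c, S m -> (c <= m)%MM -> S c,
      forall a b : 'X_{1..N}, ~~ S b -> (forall c, (c <= b)%MM -> c != b -> S c) ->
         mdeg a = mdeg b -> degrevlex_gt a b -> ~~ S a
    & exists L : nat -> seq 'X_{1..N}, forall d,
        [/\ uniq (L d), size (L d) = h d & forall m, (m \in L d) = (mdeg m == d) && S m]].

Arguments comb_ok : clear implicits.

Lemma comb_zero N (h : nat -> nat) : h 0%N = 1%N -> (forall d, (0 < d)%N -> h d = 0%N) ->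
  exists S, comb_ok N h S.
Proof.
move=> h0 hd; exists (fun m : 'X_{1..N} => mdeg m == 0%N); split.
- by move=> m c /eqP m0 /lem_mdeg; rewrite m0 leqn0.
- by move=> a b nb _ e _; rewrite /= e.
exists (fun d => if d == 0%N then [:: 0%MM] else [::]) => d.
case: eqP => [->|/eqP nd].
  split; [by [] | by rewrite h0 | move=> m].
  by rewrite inE andbb mdeg_eq0.
split; [by [] | by rewrite hd // lt0n | move=> m].
by rewrite in_nil; case: eqP => // ->; rewrite (negbTE nd).
Qed.

Section Step.
Variable n : nat.
Variable h : nat -> nat.
Local Notation g := (hdiff h 1).
Variable T : pred 'X_{1..n}.
Variable LT : nat -> seq 'X_{1..n}.
Hypothesis Tdown : forall m c, T m -> (c <= m)%MM -> T c.
Hypothesis Talm : forall a b : 'X_{1..n}, ~~ T b -> (forall c, (c <= b)%MM -> c != b -> T c) ->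
         mdeg a = mdeg b -> degrevlex_gt a b -> ~~ T a.
Hypothesis LTu : forall d, uniq (LT d).
Hypothesis LTs : forall d, size (LT d) = g d.
Hypothesis LTm : forall d m, (m \in LT d) = (mdeg m == d) && T m.
Variables (fin : bool) (r0 : nat).
Hypothesis r0pos : (1 <= r0)%N.
Hypothesis h0 : h 0%N = 1%N.
Hypothesis hinc : forall e, (1 <= e)%N -> (~~ fin || (e < r0)%N) -> (h e.-1 < h e)%N.
Hypothesis hdec : fin -> forall d, (r0 <= d)%N -> (h d <= h d.-1)%N.

Definition dec d := fin && (r0 <= d)%N.

Lemma dec_mono d d' : (d <= d')%N -> dec d -> dec d'.
Proof. by rewrite /dec => le /andP[-> l]; apply: leq_trans l le. Qed.

Lemma T_deg q : fin -> T q -> (mdeg q < r0)%N.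
Proof.
move=> f Tq; rewrite ltnNge; apply/negP => le.
have : q \in LT (mdeg q) by rewrite LTm eqxx.
suff -> : LT (mdeg q) = [::] by [].
apply: size0nil; rewrite LTs.
case: (mdeg q) le (hdec f le) => [|d] /=; first by rewrite leqn0 => /eqP r00; move: r0pos; rewrite r00.
by move=> _ /eqP.
Qed.

Definition bumpl (m : 'X_{1..n.+1}) := ext (res m) (m ord_max).+1.

Fixpoint Lnd d := match d with
  | 0 => map (fun q => ext q 0) (LT 0)
  | d'.+1 => map bumpl (Lnd d') ++ map (fun q => ext q 0) (LT d'.+1)
  end.

Lemma bumpl_inj : injective bumpl.
Proof.
move=> m1 m2 /ext_inj [e1 [e2]].
by rewrite -(ext_res m1) -(ext_res m2) e1 e2.
Qed.

Lemma ext0_inj : injective (fun q : 'X_{1..n} => ext q 0).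
Proof. by move=> q1 q2 /ext_inj []. Qed.

Lemma mem_ext0 m (s : seq 'X_{1..n}) : (m \in map (fun q => ext q 0) s) = (m ord_max == 0%N) && (res m \in s).
Proof.
rewrite -{1}(ext_res m); case: (m ord_max) => [|j] /=.
  by rewrite (mem_map ext0_inj).
apply/mapP => [[q _ /ext_inj [_ //]]].
Qed.

Lemma mem_bumpl m s : (m \in map bumpl s) = (0 < m ord_max)%N && (ext (res m) (m ord_max).-1 \in s).
Proof.
rewrite -{1}(ext_res m); case: (m ord_max) => [|j] /=.
  by apply/mapP => [[q _]] /ext_inj [_].
have -> : ext (res m) j.+1 = bumpl (ext (res m) j) by rewrite /bumpl res_ext last_ext.
by rewrite (mem_map bumpl_inj).
Qed.

Lemma Lnd_mem d m : (m \in Lnd d) = (mdeg m == d) && T (res m).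
Proof.
elim: d m => [|d IH] m /=.
  rewrite mem_ext0 LTm mdeg_res.
  by case: (m ord_max) => [|j]; rewrite ?addn0 ?andbF //= addnS.
rewrite mem_cat mem_bumpl mem_ext0 IH LTm mdeg_ext res_ext (mdeg_res m).
case: (m ord_max) => [|j] /=; first by rewrite addn0.
by rewrite addnS eqSS orbF.
Qed.

Lemma Lnd_uniq d : uniq (Lnd d).
Proof.
elim: d => [|d IH] /=; first by rewrite (map_inj_uniq ext0_inj).
rewrite cat_uniq (map_inj_uniq bumpl_inj) (map_inj_uniq ext0_inj) IH LTu /= andbT.
apply/hasPn => m; rewrite mem_ext0 mem_bumpl => /andP[/eqP -> _].
by [].
Qed.

Lemma Lnd_size d : ~~ dec d -> size (Lnd d) = h d.
Proof.
elim: d => [|d IH] nd /=; first by rewrite size_map LTs.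
rewrite size_cat !size_map IH ?LTs.
  have := hinc (e := d.+1) isT.
  have : ~~ fin || (d.+1 < r0)%N by move: nd; rewrite /dec; case: fin => //=; rewrite -ltnNge.
  by move=> H /(_ H) /=; lia.
by apply: contra nd; apply: dec_mono.
Qed.

Fixpoint Qr k := match k with 0 => [::] | k'.+1 => Qr k' ++ LT k' end.

Lemma Qr_mem k q : (q \in Qr k) = (mdeg q < k)%N && T q.
Proof.
elim: k => [|k IH] //=.
rewrite mem_cat IH LTm; case: (T q); rewrite ?andbT ?andbF //.
by rewrite [RHS]ltnS [RHS]leq_eqVlt orbC.
Qed.

Lemma Qr_uniq k : uniq (Qr k).
Proof.
elim: k => [|k IH] //=; rewrite cat_uniq IH LTu andbT /=.
apply/hasPn => q; rewrite LTm Qr_mem => /andP[/eqP -> _].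
by rewrite ltnn.
Qed.

Lemma Qr_size k : (k < r0)%N -> size (Qr k.+1) = h k.
Proof.
elim: k => [|k IH] lt /=; first by rewrite LTs.
rewrite size_cat IH ?LTs; last by apply: ltnW.
have := hinc (e := k.+1) isT; rewrite lt orbT => /(_ isT) /=; lia.
Qed.

Definition sQ := sort (@leQ n) (Qr r0).

Lemma sQ_mem q : (q \in sQ) = (mdeg q < r0)%N && T q.
Proof. by rewrite mem_sort Qr_mem. Qed.

Lemma sQ_uniq : uniq sQ.
Proof. by rewrite sort_uniq Qr_uniq. Qed.

Lemma sQ_size : size sQ = h r0.-1.
Proof. by rewrite size_sort -[in Qr _](prednK r0pos) Qr_size // ltn_predL. Qed.

Lemma sQ_sorted : sorted (@leQ n) sQ.
Proof. exact: (sort_sorted (@leQ_total n)). Qed.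

Lemma h_noninc d' d : fin -> (r0.-1 <= d')%N -> (d' <= d)%N -> (h d <= h d')%N.
Proof.
move=> f l1; elim: d => [|d IH]; first by rewrite leqn0 => /eqP ->.
rewrite leq_eqVlt => /orP[/eqP -> //|]; rewrite ltnS => l2.
apply: leq_trans (IH l2); apply: (hdec f).
by move: l1 l2; lia.
Qed.


Lemma take_mono c c' q : (c <= c')%N -> q \in take c sQ -> q \in take c' sQ.
Proof. by move=> le; rewrite -(take_takel _ le); apply: mem_take. Qed.

Definition Sst (m : 'X_{1..n.+1}) : bool :=
  if dec (mdeg m) then res m \in take (h (mdeg m)) sQ else T (res m).

Lemma Sst_down m c : Sst m -> (c <= m)%MM -> Sst c.
Proof.
move=> Sm le; have dl := lem_mdeg le.
move: le; rewrite lem_res => /andP[lr _].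
move: Sm; rewrite /Sst.
case dm: (dec (mdeg m)); case dc: (dec (mdeg c)).
- move=> qin.
  have f : fin by move: dc; rewrite /dec => /andP[].
  apply: (take_mono (c := h (mdeg m))).
    apply: h_noninc => //; move: dc; rewrite /dec => /andP[_]; lia.
  case: (eqVneq (res c) (res m)) => [->//|ne].
  apply: (take_downset (@leQ_trans n) sQ_sorted qin).
    move: (mem_take qin); rewrite !sQ_mem => /andP[l Tm].
    rewrite (Tdown Tm lr) andbT; apply: leq_ltn_trans l; exact: lem_mdeg.
  by apply: leQ_deg; apply: lem_mdeg_lt.
- move=> qin; move: (mem_take qin); rewrite sQ_mem => /andP[_ Tm].
  exact: Tdown Tm lr.
- by rewrite (dec_mono dl dc) in dm.
- by move=> Tm; apply: Tdown Tm lr.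
Qed.

Lemma lift_max_val (t : 'I_n) : (lift ord_max t : nat) = t.
Proof. by rewrite /= /bump leqNgt ltn_ord. Qed.

Lemma Sst_alm (a b : 'X_{1..n.+1}) : ~~ Sst b -> (forall c, (c <= b)%MM -> c != b -> Sst c) ->
         mdeg a = mdeg b -> degrevlex_gt a b -> ~~ Sst a.
Proof.
move=> nSb minb eab [lt|[_ [s [lts eqs]]]]; first by rewrite eab ltnn in lt.
have ea := mdeg_res a; have eb := mdeg_res b.
case eb0: (b ord_max) => [|j].
- have sneq : s != ord_max by apply: contraTneq lts => ->; rewrite eb0.
  case: (unliftP ord_max s) sneq => [s' es|->]; last by rewrite eqxx.
  move=> _.
  have ea0 : a ord_max = 0%N.
    by rewrite eqs ?eb0 // es lift_max_val; apply: ltn_ord.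
  move: nSb; rewrite /Sst -eab.
  case dd: (dec (mdeg a)).
    move=> _; apply/negP => qin; move: (mem_take qin); rewrite sQ_mem => /andP[l _].
    by move: dd l; rewrite /dec ea ea0 addn0 => /andP[_]; lia.
  move=> nTb; apply: (@Talm (res a) (res b) nTb).
  - move=> c' lc' nc'.
    have : Sst (ext c' 0).
      apply: minb.
        by rewrite -(ext_res b) eb0 lem_ext lc'.
      by apply: contra nc' => /eqP <-; rewrite res_ext.
    rewrite /Sst res_ext mdeg_ext addn0.
    have -> // : dec (mdeg c') = false.
    apply/negbTE; apply: contra (negbT dd); apply: dec_mono.
    by rewrite eab eb eb0 addn0; apply: lem_mdeg.
  - by move: eab; rewrite ea eb ea0 eb0 !addn0.
  right; split; first by move: eab; rewrite ea eb ea0 eb0 !addn0.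
  exists s'; split; first by rewrite !mnmE -es.
  move=> t st; rewrite !mnmE; apply: eqs.
  by rewrite es !lift_max_val.
- set c := ext (res b) j.
  have Sc : Sst c.
    apply: minb; first by rewrite /c -{2}(ext_res b) eb0 lem_ext lepm_refl leqnSn.
    by rewrite /c -{2}(ext_res b) eb0; apply/eqP => /ext_inj [_]; lia.
  move: nSb Sc; rewrite /Sst mdeg_ext res_ext -eab.
  case dd: (dec (mdeg a)); last first.
    have -> : dec (mdeg (res b) + j) = false.
      apply/negbTE; apply: contra (negbT dd); apply: dec_mono.
      by rewrite eab eb eb0 addnS.
    by move=> /negP H /H.
  move=> nrb Sc; apply/negP => qin; move/negP: nrb; apply.
  have f : fin by move: dd; rewrite /dec => /andP[].
  apply: (take_downset (@leQ_trans n) sQ_sorted qin).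
    move: Sc; case: (dec (mdeg (res b) + j)) => [/mem_take //|Tb].
    rewrite sQ_mem Tb andbT.
    by move: (T_deg f Tb).
  case: (unliftP ord_max s) => [s' es|es].
    have ea0 : a ord_max = b ord_max.
      by apply: eqs; rewrite es lift_max_val; apply: ltn_ord.
    apply: (leQ_revlex (s := s')).
    - by move: eab; rewrite ea eb ea0 => /eqP; rewrite eqn_add2r => /eqP.
    - by rewrite !mnmE -es.
    move=> t st; rewrite !mnmE; apply: eqs.
    by rewrite es !lift_max_val.
  apply: leQ_deg; move: lts eab; rewrite es ea eb; lia.
Qed.

Definition Ld d := if dec d then map (fun q => ext q (d - mdeg q)) (take (h d) sQ) else Lnd d.

Lemma Ld_ok d : [/\ uniq (Ld d), size (Ld d) = h d & forall m, (m \in Ld d) = (mdeg m == d) && Sst m].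
Proof.
rewrite /Ld /Sst; case dd: (dec d); last first.
  split; [exact: Lnd_uniq | by rewrite Lnd_size // dd | move=> m].
  by rewrite Lnd_mem; case: eqP => // ->; rewrite dd.
have f : fin by move: dd; rewrite /dec => /andP[].
have finj : injective (fun q : 'X_{1..n} => ext q (d - mdeg q)).
  by move=> q1 q2 /ext_inj [].
split.
- by rewrite (map_inj_uniq finj) take_uniq // sQ_uniq.
- rewrite size_map size_takel // sQ_size; apply: h_noninc => //.
  by move: dd; rewrite /dec => /andP[_]; lia.
move=> m; apply/mapP/andP => [[q qin ->]|[/eqP md]].
  have lq : (mdeg q < r0)%N by move: (mem_take qin); rewrite sQ_mem => /andP[].
  have -> : mdeg (ext q (d - mdeg q)) = d.
    by rewrite mdeg_ext; move: dd; rewrite /dec => /andP[_]; lia.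
  by rewrite eqxx dd res_ext.
rewrite md dd => qin; exists (res m) => //.
by rewrite -{1}(ext_res m); congr ext; move: (mdeg_res m); rewrite md; lia.
Qed.

End Step.
Lemma step_gen n h (T : pred 'X_{1..n}) LT fin r0 :
  comb_ok n (hdiff h 1) T ->
  (forall d, [/\ uniq (LT d), size (LT d) = hdiff h 1 d & forall m, (m \in LT d) = (mdeg m == d) && T m]) ->
  (1 <= r0)%N -> h 0%N = 1%N ->
  (forall e, (1 <= e)%N -> (~~ fin || (e < r0)%N) -> (h e.-1 < h e)%N) ->
  (fin -> forall d, (r0 <= d)%N -> (h d <= h d.-1)%N) ->
  comb_ok n.+1 h (Sst h T LT fin r0).
Proof.
move=> [Tdown Talm _] LTok r0pos h0 hinc hdec.
have LTu d : uniq (LT d) by case: (LTok d).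
have LTs d : size (LT d) = hdiff h 1 d by case: (LTok d).
have LTm d m : (m \in LT d) = (mdeg m == d) && T m by case: (LTok d).
split.
- move=> m c; exact: (Sst_down Tdown LTm r0pos h0 hinc hdec).
- move=> a b; exact: (Sst_alm Talm LTs LTm r0pos h0 hinc hdec).
by exists (Ld h LT fin r0) => d; apply: Ld_ok.
Qed.

Lemma comb_step n h : h 0%N = 1%N -> h 1%N = n.+1 -> unimodal_at_each_tail h ->
  (exists T, comb_ok n (hdiff h 1) T) -> exists S, comb_ok n.+1 h S.
Proof.
move=> h0 h1 U [T Tok].
have [_ _ [LT LTok]] := Tok.
case: (classic (r_finite h 0)) => [rf|nrf].
  have ex : exists d, (1 <= d)%N && (h d <= h d.-1)%N.
    by case: rf => d [d1 hd]; exists d; rewrite d1 hd.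
  case: (ex_minnP ex) => r0 /andP[r1 hr] rmin.
  have hinc : forall e, (1 <= e)%N -> (~~ true || (e < r0)%N) -> (h e.-1 < h e)%N.
    move=> e e1 /= er; rewrite ltnNge; apply/negP => he.
    by move: (rmin e); rewrite e1 he => /(_ isT); rewrite leqNgt er.
  exists (Sst h T LT true r0); apply: step_gen => //.
  move=> _ d rd; apply: (U 0%N _ _ r0) => //.
  - by rewrite leq_max.
  - exists 0%N; split; [by [] | exact: rf].
exists (Sst h T LT false 1); apply: step_gen => //.
move=> e e1 _; rewrite ltnNge; apply/negP => he; apply: nrf.
by exists e.
Qed.

Lemma comb_main n : forall h, h 0%N = 1%N -> h 1%N = n -> unimodal_at_each_tail h ->
  exists S, comb_ok n h S.
Proof.
elim: n => [|n IH] h h0 h1 U.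
  apply: comb_zero => // d d0.
  have H := unimodal0 h0 U (leq_trans (eq_leq h1) (leq0n 1)).
  elim: d d0 => // d IHd _.
  case: d IHd => [|d] IHd; first by rewrite h1.
  by apply/eqP; rewrite -leqn0 -(IHd isT) (H d.+2 isT).
apply: comb_step => //.
apply: IH.
- by [].
- by rewrite /= h1 h0 subn1.
exact: (unimodal_diff h0 h1 U).
Qed.
Local Open Scope ring_scope.
Import GRing.Theory.

Lemma ker_nonzero (k : fieldType) (m : nat) (A : 'M[k]_(m.+1, m)) :
  exists u : 'rV[k]_m.+1, u != 0 /\ u *m A = 0.
Proof.
have nz : kermx A != 0.
  rewrite kermx_eq0 /row_free; apply/negP => /eqP e.
  by move: (rank_leq_col A); rewrite e ltnn.
have [i ni] : exists i, row i (kermx A) != 0.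
  apply: NNPP => H; move/negP: nz; apply; apply/eqP/matrixP => i j.
  have : row i (kermx A) == 0 by apply/negPn/negP => ni; apply: H; exists i.
  by move/eqP/rowP/(_ j); rewrite !mxE.
by exists (row i (kermx A)); rewrite ni -row_mul mulmx_ker row0.
Qed.

Section Alg.
Variables (k : fieldType) (N : nat) (h : nat -> nat) (S : pred 'X_{1..N}).
Hypothesis Sok : comb_ok N h S.

Definition Iof (p : {mpoly k[N]}) : Prop := forall m, m \in msupp p -> ~~ S m.

Lemma I_X m : Iof 'X_[m] <-> ~~ S m.
Proof.
rewrite /Iof msuppX; split => [H|H m'].
  by apply: H; rewrite inE.
by rewrite inE => /eqP ->.
Qed.

Lemma Iof_ideal : is_monomial_ideal Iof.
Proof.
have [Sdown _ _] := Sok.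
split; first split.
- by move=> m; rewrite mcoeff_msupp mcoeff0 eqxx.
- move=> p q Ip Iq m /msuppD_le; rewrite mem_cat => /orP[]; [exact: Ip | exact: Iq].
- move=> p q Iq m /msuppM_le /allpairsP [[m1 m2] [/= _ m2in ->]].
  apply/negP => Sm; move/negP: (Iq m2 m2in); apply.
  exact: (Sdown _ _ Sm (lem_addl m1 m2)).
- move=> p Ip m min; apply/I_X; exact: Ip.
Qed.

Lemma Iof_alm : almost_revlex Iof.
Proof.
have [_ Salm _] := Sok.
move=> a b [Ib minb] e gt; apply/I_X.
apply: (Salm a b) => //; first by apply/I_X.
move=> c le ne; apply/negPn/negP => nSc.
by apply: (minb c le ne); apply/I_X.
Qed.

Lemma Iof_hilb d : hilb_eq Iof d (h d).
Proof.
have [_ _ [L Lok]] := Sok.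
have [Lu Ls Lm] := Lok d.
have nthL (i : 'I_(h d)) : nth 0%MM (L d) i \in L d.
  by apply: mem_nth; rewrite Ls ltn_ord.
split.
  exists (fun i => 'X_[nth 0%MM (L d) i]); split.
    move=> i; rewrite dhomogX; move: (nthL i); rewrite Lm => /andP[] //.
  move=> c Ic i; apply/eqP; apply/contraT => nci.
  set p := \sum_(i0 < h d) c i0 *: 'X_[nth 0%MM (L d) i0] in Ic.
  have pc : p@_(nth 0%MM (L d) i) = c i.
    rewrite /p raddf_sum (bigD1 i) //= mcoeffZ mcoeffX eqxx mulr1 big1 ?addr0 //.
    move=> j ji; rewrite mcoeffZ mcoeffX.
    by rewrite nth_uniq ?Ls ?ltn_ord //; move: ji; rewrite -val_eqE => /negbTE ->; rewrite mulr0.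
  have : nth 0%MM (L d) i \in msupp p by rewrite mcoeff_msupp pc.
  move/Ic; move: (nthL i); rewrite Lm => /andP[_ ->] //.
move=> ps hps lin.
pose A : 'M[k]_((h d).+1, h d) := \matrix_(i, j) (ps i)@_(nth 0%MM (L d) j).
have [u [nu uA]] := ker_nonzero A.
move/negP: nu; apply; apply/eqP/rowP => i; rewrite mxE.
apply: (lin (fun i => u 0 i)) => m.
set p := \sum_(i < _) _.
have hp : p \is d.-homog by apply: rpred_sum => i1 _; apply: rpredZ.
move=> mp; apply/negP => Sm.
have md := dhomog_mf hp mp.
have mL : m \in L d by rewrite Lm md eqxx.
have jlt : (index m (L d) < h d)%N by rewrite -Ls index_mem.
move: mp; rewrite mcoeff_msupp.
have -> : p@_m = (u *m A) 0 (Ordinal jlt).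
  rewrite /p raddf_sum !mxE; apply: eq_bigr => i' _.
  rewrite mxE; apply: etrans (mcoeffZ _ _ m) _.
  by rewrite /= nth_index.
by rewrite uA mxE eqxx.
Qed.

End Alg.

Theorem theorem3p9 (k : fieldType) (h : nat -> nat) :
  h 0%N = 1%N ->
  unimodal_at_each_tail h ->
  exists I : {mpoly k[maxn 1 (h 1%N)]} -> Prop,
    [/\ is_monomial_ideal I, almost_revlex I &
        forall d : nat, hilb_eq I d (h d)].
Proof.
move=> h0 U.
have [S Sok] : exists S, comb_ok (maxn 1 (h 1%N)) h S.
  case h1 : (h 1%N) => [|n].
    apply: comb_zero => // d d0.
    have H := unimodal0 h0 U (leq_trans (eq_leq h1) (leq0n 1)).
    elim: d d0 => // d IHd _.
    case: d IHd => [|d] IHd; first by rewrite h1.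
    by apply/eqP; rewrite -leqn0 -(IHd isT) (H d.+2 isT).
  rewrite (maxn_idPr (ltn0Sn n)); exact: comb_main.
exists (@Iof k _ S); split.
- exact: Iof_ideal Sok.
- exact: Iof_alm Sok.
- exact: Iof_hilb Sok.
Qed.
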